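(* Let $(E,\tau)$ be a locally solid vector lattice, where $\tau$ is a Fatou topology. Suppose that the carrier $C_\tau$ has a countable order basis. Then $C_\tau=E$.
   Context: All vector lattices are real and Archimedean; linear topologies are Hausdorff. A locally solid topology on a vector lattice is a linear topology such that zero has a neighbourhood basis of solid sets. A subset is order closed if it contains the order limits of nets in it (a net $x_\alpha$ order converges to $x$ if there is a net $y_\beta\downarrow0$ such that for each $\beta_0$ eventually $|x_\alpha-x|\leq y_{\beta_0}$). A Fatou topology is a locally solid topology in which zero has a neighbourhood basis of order closed solid sets. A sequence $(V_n)$ of neighbourhoods of zero is normal if $V_{n+1}+V_{n+1}\subseteq V_n$; the carrier $C_\tau$ is the union of the disjoint complements $N^{\mathrm d}$ (in $E$) where $N=\bigcap_n V_n$ ranges over intersections of normal sequences of solid $\tau$-neighbourhoods of zero. A non-empty subset $A$ of a vector lattice $G$ is an order basis of $G$ if $A^{\mathrm d}=\{0\}$ in $G$. *)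

(* Defs.v *)
From HB Require Import structures.
From mathcomp Require Import all_boot all_order all_algebra.
From mathcomp Require Import all_classical all_reals all_analysis.
Set Implicit Arguments.
Unset Strict Implicit.
Unset Printing Implicit Defensive.
Import Order.TTheory GRing.Theory Num.Theory.
Local Open Scope classical_set_scope.
Local Open Scope ring_scope.

Section VectorLattice.
Variables (R : realType) (E : lmodType R) (le : E -> E -> Prop).

Definition is_sup2 (x y z : E) : Prop :=
  le x z /\ le y z /\ forall w, le x w -> le y w -> le z w.

Definition is_inf_set (A : set E) (z : E) : Prop :=
  (forall a, A a -> le z a) /\ forall w, (forall a, A a -> le w a) -> le w z.

Record vector_lattice : Prop := VectorLattice {
  vl_refl : forall x, le x x;
  vl_trans : forall x y z, le x y -> le y z -> le x z;
  vl_antisym : forall x y, le x y -> le y x -> x = y;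
  vl_add : forall x y z, le x y -> le (x + z) (y + z);
  vl_scale : forall (a : R) x y, 0 <= a -> le x y -> le (a *: x) (a *: y);
  vl_sup : forall x y, exists z, is_sup2 x y z;
  vl_archimedean : forall x y : E,
      (forall n : nat, le 0 (x *+ n) /\ le (x *+ n) y) -> x = 0 }.

Definition sup2 (x y : E) : E := xget 0 [set z | is_sup2 x y z].
Definition absv (x : E) : E := sup2 x (- x).
Definition inf2 (x y : E) : E := - sup2 (- x) (- y).

Definition disj (x y : E) : Prop := inf2 (absv x) (absv y) = 0.

Definition dcompl (A : set E) : set E := [set x | forall y, A y -> disj x y].

Definition solid (A : set E) : Prop :=
  forall x y, A x -> le (absv y) (absv x) -> A y.

Definition directed (I : Type) (r : I -> I -> Prop) : Prop :=
  inhabited I /\ (forall i, r i i) /\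
  (forall i j k, r i j -> r j k -> r i k) /\
  (forall i j, exists k, r i k /\ r j k).

Definition decr_to_zero (J : Type) (rJ : J -> J -> Prop) (y : J -> E) : Prop :=
  directed rJ /\ (forall b1 b2, rJ b1 b2 -> le (y b2) (y b1)) /\
  is_inf_set (range y) 0.

Definition order_conv (I : Type) (rI : I -> I -> Prop) (x : I -> E) (l : E)
  : Prop :=
  exists (J : Type) (rJ : J -> J -> Prop) (y : J -> E),
    decr_to_zero rJ y /\
    forall b0, exists a0, forall a, rI a0 a -> le (absv (x a - l)) (y b0).

Definition order_closed (A : set E) : Prop :=
  forall (I : Type) (rI : I -> I -> Prop) (x : I -> E) (l : E),
    directed rI -> (forall i, A (x i)) -> order_conv rI x l -> A l.

(** order basis of a subset G (G will be an ideal, so disjointness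
    in G coincides with disjointness in E) *)
Definition order_basis (G A : set E) : Prop :=
  A !=set0 /\ A `<=` G /\ forall x, G x -> (forall a, A a -> disj x a) -> x = 0.

End VectorLattice.

Section Topology.
Variables (R : realType) (E : topologicalLmodType R) (le : E -> E -> Prop).

Definition locally_solid : Prop :=
  forall U : set E, nbhs 0 U ->
    exists V : set E, nbhs 0 V /\ solid le V /\ V `<=` U.

Definition fatou_topology : Prop :=
  locally_solid /\
  forall U : set E, nbhs 0 U ->
    exists V : set E, nbhs 0 V /\ solid le V /\ order_closed le V /\ V `<=` U.

Definition normal_solid_seq (V : nat -> set E) : Prop :=
  (forall n, nbhs 0 (V n)) /\ (forall n, solid le (V n)) /\
  (forall n x y, V n.+1 x -> V n.+1 y -> V n (x + y)).

Definition carrier : set E :=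
  [set x | exists V : nat -> set E, normal_solid_seq V /\
                                   dcompl le (\bigcap_n V n) x].

End Topology.

(* Main.v *)
Require Import Defs.
From HB Require Import structures.
From mathcomp Require Import all_boot all_order all_algebra.
From mathcomp Require Import all_classical all_reals all_analysis.
From mathcomp Require Import zify.
Set Implicit Arguments.
Unset Strict Implicit.
Unset Printing Implicit Defensive.
Import Order.TTheory GRing.Theory Num.Theory.
Local Open Scope classical_set_scope.
Local Open Scope ring_scope.

Section Lat.
Variables (R : realType) (E : topologicalLmodType R) (le : E -> E -> Prop).
Hypothesis vl : vector_lattice le.

Lemma lrefl x : le x x. Proof. exact: (vl_refl vl x). Qed.
Lemma ltr x y z : le x y -> le y z -> le x z. Proof. exact: (vl_trans vl). Qed.
Lemma lanti x y : le x y -> le y x -> x = y. Proof. exact: (vl_antisym vl). Qed.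
Lemma laddr x y z : le x y -> le (x + z) (y + z). Proof. exact: (vl_add vl). Qed.
Lemma laddl x y z : le x y -> le (z + x) (z + y).
Proof. by move=> h; rewrite ![z + _]addrC; apply: laddr. Qed.
Lemma ladd x y u v : le x y -> le u v -> le (x + u) (y + v).
Proof. move=> h1 h2; apply: ltr (laddr u h1) (laddl y h2). Qed.
Lemma lopp x y : le x y -> le (- y) (- x).
Proof.
move=> h; have := laddr (- x - y) h.
by rewrite addrA subrr add0r addrCA subrr addr0.
Qed.
Lemma lsub0 x y : le x y <-> le 0 (y - x).
Proof.
split=> h; first by have := laddr (- x) h; rewrite subrr.
by have := laddr x h; rewrite add0r subrK.
Qed.
Lemma lsubP x y : le x y -> le 0 (y - x).
Proof. by move/lsub0. Qed.
Lemma lsubr x y : le 0 y -> le (x - y) x.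
Proof. by move=> h; apply/lsub0; rewrite opprB addrC subrK. Qed.
Lemma ladd0 a b : le 0 a -> le 0 b -> le 0 (a + b).
Proof. by move=> h1 h2; have := ladd h1 h2; rewrite addr0. Qed.

Lemma sup2P x y : is_sup2 le x y (sup2 le x y).
Proof. by apply: xgetPex; exact: (vl_sup vl x y). Qed.
Lemma sup2_uniq x y z : is_sup2 le x y z -> sup2 le x y = z.
Proof.
move=> [h1 [h2 h3]]; have [k1 [k2 k3]] := sup2P x y.
by apply: lanti; [apply: k3|apply: h3].
Qed.
Lemma sup2C x y : sup2 le x y = sup2 le y x.
Proof.
apply: sup2_uniq; have [k1 [k2 k3]] := sup2P y x.
by split=> //; split=> // w h1 h2; apply: k3.
Qed.
Lemma inf2_le1 x y : le (inf2 le x y) x.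
Proof.
have [k1 _] := sup2P (- x) (- y); have := lopp k1.
by rewrite opprK.
Qed.
Lemma inf2C x y : inf2 le x y = inf2 le y x.
Proof. by rewrite /inf2 sup2C. Qed.
Lemma inf2_le2 x y : le (inf2 le x y) y.
Proof. by rewrite inf2C; apply: inf2_le1. Qed.
Lemma inf2_glb x y w : le w x -> le w y -> le w (inf2 le x y).
Proof.
move=> h1 h2; have [_ [_ k3]] := sup2P (- x) (- y).
have := lopp (k3 _ (lopp h1) (lopp h2)); rewrite opprK; done.
Qed.
Lemma inf2_uniq x y z : le z x -> le z y ->
  (forall w, le w x -> le w y -> le w z) -> inf2 le x y = z.
Proof.
move=> h1 h2 h3; apply: lanti; first by apply: h3; [apply: inf2_le1|apply: inf2_le2].
exact: inf2_glb.
Qed.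

Lemma absv_ge0 x : le 0 (absv le x).
Proof.
have [k1 [k2 _]] := sup2P x (- x).
have h : le 0 (absv le x + absv le x).
  by have := ladd k1 k2; rewrite subrr.
have h2 : (0 <= (2:R)^-1) by rewrite invr_ge0 ler0n.
have := vl_scale vl h2 h.
have e : (2:R)^-1 + 2^-1 = 1 by rewrite [in RHS](splitr 1) mul1r.
by rewrite scaler0 scalerDr -scalerDl e scale1r.
Qed.

Lemma absv_pos x : le 0 x -> absv le x = x.
Proof.
move=> h; apply: sup2_uniq; split; first exact: lrefl.
split; first by have := lopp h; rewrite oppr0 => h'; apply: ltr h' h.
by move=> w h1 _.
Qed.
Lemma absv_neg x : le x 0 -> absv le x = - x.
Proof.
move=> h; apply: sup2_uniq; split; last by split; [exact: lrefl| move=> w _ ?].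
by have := lopp h; rewrite oppr0 => h'; apply: ltr h h'.
Qed.
Lemma absv0 : absv le 0 = 0.
Proof. by apply: absv_pos; apply: lrefl. Qed.
Lemma absvK x : absv le (absv le x) = absv le x.
Proof. exact/absv_pos/absv_ge0. Qed.
Lemma inf2_ge0 x y : le 0 x -> le 0 y -> le 0 (inf2 le x y).
Proof. by move=> *; apply: inf2_glb. Qed.
Lemma disjC x y : disj le x y -> disj le y x.
Proof. by rewrite /disj inf2C. Qed.
Lemma disj0 x : disj le x 0.
Proof.
rewrite /disj absv0; apply: inf2_uniq; [exact: absv_ge0|exact: lrefl|].
by move=> w _ ?.
Qed.
Lemma solid_dcompl (A : set E) : solid le (dcompl le A).
Proof.
move=> x y hx hxy a Aa; have := hx a Aa; rewrite /disj => h.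
apply: lanti; last by apply: inf2_ge0; apply: absv_ge0.
rewrite -h; apply: inf2_glb; last exact: inf2_le2.
by apply: ltr (inf2_le1 _ _) hxy.
Qed.
Lemma add_nbhs (W : set E) : nbhs 0 W ->
  exists V : set E, nbhs 0 V /\ forall a b, V a -> V b -> W (a + b).
Proof.
move=> hW.
have := @add_continuous _ (0, 0) W; rewrite /= addr0 => /(_ hW).
move=> [[A B] /= [hA hB] hAB].
exists (A `&` B); split; first exact: filterI.
by move=> a b [Aa _] [_ Bb]; apply: (hAB (a, b)).
Qed.

Section NSeq.
Variable V : nat -> set E.
Hypothesis nV : normal_solid_seq le V.

Lemma ns0 n : V n 0.
Proof. by case: nV => h _; apply: nbhs_singleton (h n). Qed.
Lemma nsS n x : V n.+1 x -> V n x.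
Proof. by case: nV => _ [_ h] vx; have := h n x 0 vx (ns0 _); rewrite addr0. Qed.
Lemma nsle k n x : (k <= n)%N -> V n x -> V k x.
Proof.
elim: n => [|n IH]; first by rewrite leqn0 => /eqP ->.
rewrite leq_eqVlt => /orP [/eqP -> //| hk] vx.
by apply: IH => //; apply: nsS.
Qed.
Lemma nsI_add a b : (\bigcap_n V n) a -> (\bigcap_n V n) b ->
  (\bigcap_n V n) (a + b).
Proof. by case: nV => _ [_ h] ha hb n _; apply: h; [apply: ha|apply: hb]. Qed.
Lemma nsI_solid : solid le (\bigcap_n V n).
Proof. by case: nV => _ [h _] x y hx hxy n _; apply: (h n x) => //; apply: hx. Qed.
Lemma nsI0 : (\bigcap_n V n) 0.
Proof. by move=> n _; apply: ns0. Qed.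
End NSeq.
Lemma fatou_seq (U : set E) : fatou_topology le -> nbhs 0 U ->
  exists Us : nat -> set E, normal_solid_seq le Us /\
    (forall n, order_closed le (Us n)) /\ Us 0 `<=` U.
Proof.
move=> [_ hf] hU.
pose Q (W V : set E) := nbhs 0 V /\ solid le V /\ order_closed le V /\
  (forall a b, V a -> V b -> W (a + b)).
have H : forall W, exists V, nbhs 0 W -> Q W V.
  move=> W; case: (pselect (nbhs 0 W)) => hW; last by exists W.
  have [V0 [hV0 hs]] := add_nbhs hW.
  have [V [hV [sV [oV VV0]]]] := hf _ hV0.
  exists V => _; split=> //; split=> //; split=> // a b Va Vb.
  by apply: hs; apply: VV0.
have [g gP] := choice H.
have [U0 [hU0 [sU0 [oU0 U0U]]]] := hf _ hU.
pose Us n := iter n g U0.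
have hUs : forall n, nbhs 0 (Us n) /\ solid le (Us n) /\ order_closed le (Us n).
  elim=> [|n [h1 [h2 h3]]] //=.
  by have [k1 [k2 [k3 _]]] := gP _ h1.
exists Us; split; last by split=> // n; case: (hUs n) => _ [].
split; first by move=> n; case: (hUs n).
split; first by move=> n; case: (hUs n) => _ [].
move=> n x y hx hy.
by have [_ [_ [_ k]]] := gP _ (proj1 (hUs n)); apply: k.
Qed.
Lemma band_main (M S : set E) x : solid le M -> M 0 ->
  (forall a b, M a -> M b -> M (a + b)) -> le 0 x ->
  (forall z, le 0 z -> le z x -> dcompl le M z -> z = 0) ->
  order_closed le S -> M `<=` S -> S x.
Proof.
move=> sM M0 addM x0 zero oS MS.
pose D d := le 0 d /\ le d x /\ M d.
have D0 : D 0 by split; [exact: lrefl|split].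
pose I := {d : E | D d}.
pose rI := fun a b : I => le (sval a) (sval b).
have dI : directed rI.
  split; first exact: (inhabits (exist _ 0 D0)).
  split; first by move=> i; apply: lrefl.
  split; first by move=> i j k; apply: ltr.
  move=> [d1 [d10 [d1x d1M]]] [d2 [d20 [d2x d2M]]].
  have [s1 [s2 s3]] := sup2P d1 d2.
  have Ds : D (sup2 le d1 d2).
    split; first exact: ltr d10 s1.
    split; first exact: s3.
    apply: (sM (d1 + d2)); first exact: addM.
    rewrite absv_pos; last exact: ltr d10 s1.
    rewrite absv_pos; last exact: ladd0.
    apply: s3.
      by have := laddl d1 d20; rewrite addr0.
    by have := laddr d2 d10; rewrite add0r.
  by exists (exist _ _ Ds).
apply: (oS I rI sval x dI); first by move=> [d [? [? ?]]]; apply: MS.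
exists I, rI, (fun d => x - sval d); split.
  split=> //; split.
    by move=> b1 b2 h; apply: laddl; apply: lopp.
  split.
    move=> a [[d [? [dx ?]]] _ <-] /=.
    by apply: (proj1 (lsub0 d x)).
  move=> w hw.
  have hu : forall d, D d -> le d (x - w).
    move=> d Dd; have := hw (x - d) (ex_intro2 _ _ (exist _ d Dd) Logic.I erefl).
    move=> /lsub0 h; apply/lsub0.
    by rewrite addrAC.
  pose u' := inf2 le x (x - w).
  have hu' : forall d, D d -> le d u'.
    by move=> d Dd; apply: inf2_glb; [case: Dd => _ []|apply: hu].
  have u'0 : le 0 u' := hu' 0 D0.
  have z0 : le 0 (x - u') by apply: lsubP; apply: inf2_le1.
  have zx : le (x - u') x by apply: lsubr.
  have zM : dcompl le M (x - u').
    move=> m Mm; rewrite /disj (absv_pos z0).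
    set v := inf2 le _ _.
    have v0 : le 0 v by apply: inf2_ge0 => //; apply: absv_ge0.
    have vz : le v (x - u') by apply: inf2_le1.
    have vM : M v.
      by apply: (sM m) => //; rewrite absv_pos //; apply: inf2_le2.
    have Dn : forall n, D (v *+ n).
      elim=> [|n [h0 [hx hM]]]; first by rewrite mulr0n.
      rewrite mulrSr; split; first exact: ladd0.
      split; last exact: addM.
      have := ladd (hu' _ (conj h0 (conj hx hM))) vz.
      by rewrite [u' + _]addrC subrK.
    by apply: (vl_archimedean vl (y := x)) => n; case: (Dn n) => ? [].
  have := zero _ z0 zx zM => /eqP; rewrite subr_eq0 => /eqP xu.
  have := inf2_le2 x (x - w); rewrite -/u' -xu => /lsub0.
  rewrite addrAC subrr add0r => /lopp; rewrite opprK oppr0 //.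
move=> [b0 Db0]; exists (exist _ b0 Db0) => [[a [a0 [ax aM]]]] /= hab.
rewrite absv_neg; last by have := laddr (- x) ax; rewrite subrr.
by rewrite opprB; apply: laddl; apply: lopp.
Qed.
End Lat.

Theorem proposition3p15 (R : realType) (E : topologicalLmodType R)
    (le : E -> E -> Prop) :
  vector_lattice le -> hausdorff_space E ->
  locally_solid le -> fatou_topology le ->
  (exists A : set E, countable A /\ order_basis le (carrier le) A) ->
  carrier le = setT.
Proof.
move=> vl hH _ hf [A [/countable_injP [f finj] [_ [Acar Abasis]]]].
have Hn : forall n, exists V : nat -> set E, normal_solid_seq le V /\
    forall a, A a -> f a = n -> dcompl le (\bigcap_k V k) a.
  move=> n; case: (pselect (exists a, A a /\ f a = n)) => [[a [Aa fa]]|no].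
    have [V [nV dV]] := Acar a Aa.
    exists V; split=> // a' Aa' fa'.
    have -> // : a' = a by apply: finj; rewrite ?inE //; congruence.
  exists (fun _ => setT); split.
    split; first by move=> _; apply: filterT.
    by split.
  by move=> a Aa fa; exfalso; apply: no; exists a.
have [Vs VsP] := choice Hn.
pose W k := fun x => forall n, (n <= k)%N -> Vs n k x.
have nW : normal_solid_seq le W.
  split.
    move=> k; suff : forall m, nbhs 0 (fun x => forall n, (n <= m)%N -> Vs n k x).
      by apply.
    elim=> [|m IH].
      apply: filterS (proj1 (proj1 (VsP 0%N)) k).
      by move=> x hx n; rewrite leqn0 => /eqP ->.
    apply: filterS (filterI IH (proj1 (proj1 (VsP m.+1)) k)).
    move=> x [h1 h2] n hn.
    have [->|hn'] : n = m.+1 \/ (n <= m)%N by lia.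
      exact: h2.
    exact: h1.
  split.
    move=> k x y hx hxy n hn.
    by apply: (proj1 (proj2 (proj1 (VsP n))) k x) => //; apply: hx.
  move=> k x y hx hy n hn.
  apply: (proj2 (proj2 (proj1 (VsP n))) k); [apply: hx|apply: hy]; lia.
pose N := \bigcap_k W k.
have NV : forall n, N `<=` \bigcap_k Vs n k.
  move=> n x hx k _.
  apply: (nsle (proj1 (VsP n)) (n := maxn n k)); first exact: leq_maxr.
  by apply: (hx (maxn n k)) => //; exact: leq_maxl.
have AN : forall a, A a -> dcompl le N a.
  by move=> a Aa y Ny; apply: (proj2 (VsP (f a)) a Aa erefl); apply: NV.
suff N0 : forall y, N y -> y = 0.
  apply/seteqP; split=> // x _; exists W; split=> // y /N0 ->.
  exact: (disj0 vl).
move=> y Ny; apply/eqP/negPn/negP => y0.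
have [U [hU Uy]] : exists U, nbhs 0 U /\ ~ U y.
  apply/not_existsP => hc; move/eqP: y0; apply.
  apply/esym/hH => B C hB hC; exists y; split; last exact: nbhs_singleton.
  by have := hc B; move/not_andP => [//|/contrapT].
have [Us [nUs [oUs U0U]]] := fatou_seq hf hU.
pose M := \bigcap_k Us k.
have Mx : M (absv le y).
  move=> k _; apply: (band_main vl (M := M)).
  - exact: (nsI_solid nUs).
  - exact: (nsI0 nUs).
  - exact: (nsI_add nUs).
  - exact: (absv_ge0 vl).
  - move=> z z0 zx zM; apply: Abasis.
      by exists Us; split.
    move=> a Aa; apply: (disjC vl); apply: AN => //.
    apply: (nsI_solid nW (x := y)) => //.
    by rewrite (absv_pos vl z0).
  - exact: oUs.
  - by move=> m hm; apply: hm.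
have Us0y : Us 0%N y.
  apply: (proj1 (proj2 nUs) 0%N (absv le y) y (Mx 0%N Logic.I)).
  by rewrite (absvK vl); apply: (lrefl vl).
by apply: Uy; apply: U0U.
Qed.
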